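(* If $A\subseteq\mathbb{N}$ is pseudorandom, then there are infinite sets $B,C\subseteq\mathbb{N}$ such that $B+C\subseteq A$.
   Context: $\mathbb{N}=\{1,2,3,\dots\}$, $[1,n]=\{1,\dots,n\}$, $B+C=\{b+c:b\in B,c\in C\}$, $A-i=\{a-i:a\in A\}$. The upper density of $A\subseteq\mathbb{N}$ is $\overline{d}(A)=\limsup_{n\to\infty}\frac{|A\cap[1,n]|}{n}$. Work in a countably saturated nonstandard universe; ${}^*X$ denotes the nonstandard extension of $X$ and $\operatorname{st}$ the standard part. For hyperfinite $N\in{}^*\mathbb{N}\setminus\mathbb{N}$ and $X\subseteq\mathbb{N}$ write $X_N={}^*X\cap[1,N]$; the Loeb measure $\mu_N$ on $[1,N]$ is the countably additive extension of $\mu_N(Y)=\operatorname{st}(|Y|/N)$ for internal $Y\subseteq[1,N]$. Definition: $A\subseteq\mathbb{N}$ with $\overline{d}(A)=\alpha>0$ is pseudorandom if there is $N\in{}^*\mathbb{N}\setminus\mathbb{N}$ with $\mu_N(A_N)=\alpha$ such that $\chi_{A_N}-\alpha$ is weakly mixing for the unitary operator $U_T f=f\circ T$ on $L^2(\mu_N)$, where $T(x)=x+1\pmod N$ on $[1,N]$; here $x$ in a Hilbert space is weakly mixing for a unitary $U$ if $\lim_{n\to\infty}\frac1n\sum_{i=1}^n|\langle U^ix,x\rangle|=0$. Equivalently, there is such $N$ with $\lim_{n\to\infty}\frac1n\sum_{i=1}^n|\mu_N(A_N\cap(A-i)_N)-\alpha^2|=0$. *)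

(* Defs.v *)
From Stdlib Require Import Reals Lra Lia Arith.
Open Scope R_scope.

(* Subsets of N = {1,2,...} are represented as boolean predicates on nat;
   the value at 0 is irrelevant for all counting below (which ranges over [1,n]). *)

Fixpoint count (X : nat -> bool) (n : nat) : nat :=
  match n with
  | O => O
  | S m => (count X m + (if X (S m) then 1 else 0))%nat
  end.

Definition shift_inter (A : nat -> bool) (i : nat) : nat -> bool :=
  fun x => andb (A x) (A (x + i)%nat).

(* \bar d(A) = alpha, i.e. limsup_n |A ∩ [1,n]|/n = alpha *)
Definition upper_density_is (A : nat -> bool) (alpha : R) : Prop :=
  (forall eps, eps > 0 -> exists n0 : nat, forall n : nat, (n0 <= n)%nat ->
       INR (count A n) / INR n < alpha + eps) /\
  (forall eps, eps > 0 -> forall n0 : nat, exists n : nat, (n0 <= n)%nat /\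
       INR (count A n) / INR n > alpha - eps).

(* Nonstandard universe modelled as the ultrapower of N by a nonprincipal
   ultrafilter U on N (such ultrapowers are countably saturated). *)
Definition nonprincipal_ultrafilter (U : (nat -> Prop) -> Prop) : Prop :=
  (forall S T : nat -> Prop, U S -> (forall k, S k -> T k) -> U T) /\
  (forall S T : nat -> Prop, U S -> U T -> U (fun k => S k /\ T k)) /\
  (forall S : nat -> Prop, U S \/ U (fun k => ~ S k)) /\
  ~ U (fun _ => False) /\
  (forall m : nat, U (fun k => (m <= k)%nat)).

(* N = [Nk]_U is an infinite (unlimited) hypernatural *)
Definition hyper_infinite (U : (nat -> Prop) -> Prop) (Nk : nat -> nat) : Prop :=
  forall m : nat, U (fun k => (m < Nk k)%nat).

(* the standard part of the hyperreal [x]_U equals L *)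
Definition ulim (U : (nat -> Prop) -> Prop) (x : nat -> R) (L : R) : Prop :=
  forall eps, eps > 0 -> U (fun k => Rabs (x k - L) < eps).

(* mu_N(X_N) = st(|*X ∩ [1,N]| / N) for N = [Nk]_U *)
Definition loeb_measure_is (U : (nat -> Prop) -> Prop) (Nk : nat -> nat)
  (X : nat -> bool) (m : R) : Prop :=
  ulim U (fun k => INR (count X (Nk k)) / INR (Nk k)) m.

Fixpoint sum1 (f : nat -> R) (n : nat) : R :=
  match n with
  | O => 0
  | S m => sum1 f m + f (S m)
  end.

(* Pseudorandomness (the equivalent form given in the paper):
   exists an infinite hypernatural N with mu_N(A_N) = alpha and
   lim_n (1/n) sum_{i=1}^n |mu_N(A_N ∩ (A-i)_N) - alpha^2| = 0. *)
Definition pseudorandom (U : (nat -> Prop) -> Prop) (A : nat -> bool) : Prop :=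
  exists alpha : R, alpha > 0 /\ upper_density_is A alpha /\
  exists Nk : nat -> nat, hyper_infinite U Nk /\
    loeb_measure_is U Nk A alpha /\
    exists c : nat -> R,
      (forall i : nat, (1 <= i)%nat -> loeb_measure_is U Nk (shift_inter A i) (c i)) /\
      Un_cv (fun n => / INR n * sum1 (fun i => Rabs (c i - alpha ^ 2)) n) 0.

Definition infinite_set (B : nat -> bool) : Prop :=
  forall m : nat, exists b : nat, (m < b)%nat /\ B b = true.

Definition subset_posnat (B : nat -> bool) : Prop :=
  forall b : nat, B b = true -> (1 <= b)%nat.

(* Main.v *)
Require Import Defs.
From Stdlib Require Import Reals Lra Lia Arith Classical ClassicalEpsilon.
Open Scope R_scope.

Definition indb (b : bool) : R := if b then 1 else 0.

Lemma Rabs_le_between a b : Rabs a <= b -> -b <= a <= b.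
Proof. unfold Rabs; destruct (Rcase_abs a); lra. Qed.
Lemma Rabs_lt_between' a b : Rabs a < b -> -b < a < b.
Proof. unfold Rabs; destruct (Rcase_abs a); lra. Qed.
Lemma Rabs_lt' a b : -b < a < b -> Rabs a < b.
Proof. unfold Rabs; destruct (Rcase_abs a); lra. Qed.

Lemma indb_bound b : 0 <= indb b <= 1.
Proof. destruct b; simpl; lra. Qed.

Lemma sum1_ext F G n : (forall x, (1 <= x <= n)%nat -> F x = G x) -> sum1 F n = sum1 G n.
Proof.
  induction n; simpl; intros H; auto.
  rewrite IHn, H; [reflexivity|lia|]. intros; apply H; lia.
Qed.

Lemma sum1_plus F G n : sum1 (fun x => F x + G x) n = sum1 F n + sum1 G n.
Proof. induction n; simpl; lra. Qed.

Lemma sum1_minus F G n : sum1 (fun x => F x - G x) n = sum1 F n - sum1 G n.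
Proof. induction n; simpl; lra. Qed.

Lemma sum1_scal c F n : sum1 (fun x => c * F x) n = c * sum1 F n.
Proof. induction n; simpl; [lra|]. rewrite IHn; ring. Qed.

Lemma sum1_const c n : sum1 (fun _ => c) n = INR n * c.
Proof. induction n; simpl sum1; [simpl; lra|]. rewrite IHn, S_INR; ring. Qed.

Lemma sum1_le F G n : (forall x, (1 <= x <= n)%nat -> F x <= G x) -> sum1 F n <= sum1 G n.
Proof.
  induction n; simpl; intros H; [lra|].
  assert (sum1 F n <= sum1 G n) by (apply IHn; intros; apply H; lia).
  assert (F (S n) <= G (S n)) by (apply H; lia). lra.
Qed.

Lemma sum1_nonneg F n : (forall x, (1 <= x <= n)%nat -> 0 <= F x) -> 0 <= sum1 F n.
Proof.
  intros H. rewrite <- (Rmult_0_r (INR n)), <- sum1_const. apply sum1_le. auto.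
Qed.

Lemma sum1_abs F n : Rabs (sum1 F n) <= sum1 (fun x => Rabs (F x)) n.
Proof.
  induction n; simpl; [rewrite Rabs_R0; lra|].
  eapply Rle_trans; [apply Rabs_triang|]. lra.
Qed.

Lemma sum1_bound F n B : (forall x, (1 <= x <= n)%nat -> Rabs (F x) <= B) ->
  Rabs (sum1 F n) <= INR n * B.
Proof.
  intros H. eapply Rle_trans; [apply sum1_abs|]. rewrite <- sum1_const. apply sum1_le; auto.
Qed.

Lemma count_sum X n : INR (count X n) = sum1 (fun x => indb (X x)) n.
Proof.
  induction n; simpl count; simpl sum1; [reflexivity|].
  rewrite plus_INR, IHn. unfold indb; destruct (X (S n)); simpl; lra.
Qed.

Lemma sum1_S F n : sum1 (fun x => F (S x)) n = sum1 F n - F 1%nat + F (S n).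
Proof. induction n; simpl; [lra|]. rewrite IHn. lra. Qed.

Lemma sum1_shift F n i B : (forall y, Rabs (F y) <= B) ->
  Rabs (sum1 (fun x => F (x + i)%nat) n - sum1 F n) <= 2 * INR i * B.
Proof.
  intros H. induction i.
  - simpl. rewrite (sum1_ext _ F); [|intros; f_equal; lia].
    replace (sum1 F n - sum1 F n) with 0 by ring. rewrite Rabs_R0; lra.
  - rewrite (sum1_ext _ (fun x => (fun y => F (y + i)%nat) (S x))); [|intros; simpl; f_equal; lia].
    rewrite (sum1_S (fun y => F (y + i)%nat)), S_INR.
    pose proof (H (1 + i)%nat). pose proof (H (S n + i)%nat).
    revert IHi H0 H1. generalize (sum1 (fun x => F (x + i)%nat) n) (F (1+i)%nat) (F (S n + i)%nat).
    intros a b c H0 H1 H2.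
    apply Rabs_le; apply Rabs_le_between in H0; apply Rabs_le_between in H1;
      apply Rabs_le_between in H2; lra.
Qed.

Lemma sum1_swap F n m :
  sum1 (fun i => sum1 (fun j => F i j) m) n = sum1 (fun j => sum1 (fun i => F i j) n) m.
Proof.
  induction n; simpl.
  - rewrite sum1_const. ring.
  - rewrite IHn, <- sum1_plus. reflexivity.
Qed.

Lemma sum1_prod F G n m :
  sum1 F n * sum1 G m = sum1 (fun i => sum1 (fun j => F i * G j) m) n.
Proof.
  induction n; simpl; [lra|].
  rewrite <- IHn, sum1_scal. ring.
Qed.

Lemma sum1_succ F n : sum1 F (S n) = sum1 F n + F (S n).
Proof. reflexivity. Qed.

Lemma sum1_CS F n : (sum1 F n) ^ 2 <= INR n * sum1 (fun x => F x ^ 2) n.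
Proof.
  induction n; [simpl; lra|].
  rewrite !sum1_succ, S_INR.
  destruct (Nat.eq_dec n 0) as [->|Hn].
  - simpl. nra.
  - set (S0 := sum1 F n) in *. set (Q := sum1 (fun x => F x ^ 2) n) in *. set (x := F (S n)).
    assert (0 <= Q) by (apply sum1_nonneg; intros; apply pow2_ge_0).
    assert (0 < INR n) by (apply lt_0_INR; lia).
    assert (2 * S0 * x <= Q + INR n * x ^ 2).
    { assert (S0 ^ 2 <= INR n * Q) by exact IHn.
      assert (0 <= (S0 - INR n * x) ^ 2) by apply pow2_ge_0.
      assert (INR n * (2 * S0 * x) <= INR n * (Q + INR n * x ^ 2)) by nra.
      apply Rmult_le_reg_l in H3; auto. }
    assert (S0 ^ 2 <= INR n * Q) as HH by exact IHn.
    lra.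
Qed.

Lemma sum1_peel F n : sum1 F (S n) = F 1%nat + sum1 (fun i => F (S i)) n.
Proof. rewrite sum1_S. simpl. ring. Qed.

Lemma sum1_rev g n : sum1 (fun i => g (S n - i)%nat) n = sum1 g n.
Proof.
  induction n.
  - reflexivity.
  - rewrite sum1_peel.
    replace (S (S n) - 1)%nat with (S n) by lia.
    rewrite (sum1_ext _ (fun i => g (S n - i)%nat)); [|intros; f_equal; lia].
    rewrite IHn. simpl. ring.
Qed.

Lemma sum1_mono_n e n m : (forall d, 0 <= e d) -> (n <= m)%nat -> sum1 e n <= sum1 e m.
Proof.
  intros He H. induction H; [lra|]. rewrite sum1_succ. specialize (He (S m)). lra.
Qed.

Lemma Tbound (G : nat -> nat -> R) (e : nat -> R) (n : nat) (B C : R) :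
  (forall d, 0 <= e d) -> 0 <= B -> 0 <= C ->
  (forall i j, G i j = G j i) ->
  (forall i, Rabs (G i i) <= B) ->
  (forall i j, (1 <= i)%nat -> (i < j)%nat -> (j <= n)%nat -> Rabs (G i j) <= e (j - i)%nat + C) ->
  forall n', (n' <= n)%nat ->
  sum1 (fun i => sum1 (fun j => Rabs (G i j)) n') n' <= INR n' * (B + 2 * sum1 e n + 2 * INR n * C).
Proof.
  intros He HB HC Hsym Hdiag Hoff.
  induction n' as [|m IH]; intros Hm.
  - simpl. lra.
  - assert (Hsum : sum1 (fun i => Rabs (G i (S m))) m <= sum1 e n + INR n * C).
    { apply Rle_trans with (sum1 (fun i => e (S m - i)%nat + C) m).
      - apply sum1_le. intros x Hx. apply Hoff; lia.
      - rewrite sum1_plus, sum1_rev, sum1_const.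
        assert (sum1 e m <= sum1 e n) by (apply sum1_mono_n; auto; lia).
        assert (INR m <= INR n) by (apply le_INR; lia). nra. }
    assert (Hsum' : sum1 (fun j => Rabs (G (S m) j)) m <= sum1 e n + INR n * C).
    { rewrite (sum1_ext _ (fun i => Rabs (G i (S m)))); [exact Hsum|].
      intros; rewrite Hsym; reflexivity. }
    rewrite sum1_succ.
    rewrite (sum1_ext (fun i => sum1 (fun j => Rabs (G i j)) (S m))
                      (fun i => sum1 (fun j => Rabs (G i j)) m + Rabs (G i (S m))));
      [|intros; apply sum1_succ].
    rewrite sum1_plus, sum1_succ.
    specialize (IH ltac:(lia)). specialize (Hdiag (S m)). rewrite S_INR.
    assert (0 <= sum1 e n) by (apply sum1_nonneg; auto).
    assert (0 <= INR n) by apply pos_INR.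
    assert (0 <= INR n * C) by (apply Rmult_le_pos; auto).
    nra.
Qed.

Section U.
End U.

Lemma U_mono (U : (nat -> Prop) -> Prop) (hU : nonprincipal_ultrafilter U) (P Q : nat -> Prop) :
  U P -> (forall k, P k -> Q k) -> U Q.
Proof. destruct hU as [H _]. apply H. Qed.

Lemma U_and (U : (nat -> Prop) -> Prop) (hU : nonprincipal_ultrafilter U) (P Q : nat -> Prop) :
  U P -> U Q -> U (fun k => P k /\ Q k).
Proof. destruct hU as [_ [H _]]. apply H. Qed.

Lemma U_true (U : (nat -> Prop) -> Prop) (hU : nonprincipal_ultrafilter U) (P : nat -> Prop) :
  (forall k, P k) -> U P.
Proof.
  intros H. apply (U_mono U hU (fun k => (0 <= k)%nat)); auto.
  destruct hU as [_ [_ [_ [_ H5]]]]. apply H5.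
Qed.

Lemma U_ne (U : (nat -> Prop) -> Prop) (hU : nonprincipal_ultrafilter U) (P : nat -> Prop) :
  U P -> exists k, P k.
Proof.
  intros H. destruct (Classical_Prop.classic (exists k, P k)) as [E|E]; auto.
  exfalso. destruct hU as [H1 [_ [_ [H4 _]]]]. apply H4. apply (H1 P); auto.
  intros k Pk; apply E; eauto.
Qed.

Lemma U_fin (U : (nat -> Prop) -> Prop) (hU : nonprincipal_ultrafilter U) (P : nat -> nat -> Prop) n :
  (forall d, (1 <= d <= n)%nat -> U (P d)) -> U (fun k => forall d, (1 <= d <= n)%nat -> P d k).
Proof.
  induction n; intros H.
  - apply U_true; auto. intros k d Hd; lia.
  - eapply U_mono; [auto| apply (U_and U hU _ _ (IHn ltac:(intros; apply H; lia)) (H (S n) ltac:(lia)))|].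
    intros k [H1 H2] d Hd. destruct (Nat.eq_dec d (S n)) as [->|]; auto. apply H1; lia.
Qed.

Definition fA (A : nat -> bool) (a : R) (y : nat) : R := indb (A y) - a.
Definition aa A a (Y : nat -> bool) N i : R :=
  sum1 (fun x => indb (Y x) * fA A a (x + i)%nat) N / INR N.
Definition hh A a Y N n x : R := sum1 (fun i => aa A a Y N i * fA A a (x + i)%nat) n.
Definition GG A a N i j : R := sum1 (fun x => fA A a (x + i)%nat * fA A a (x + j)%nat) N / INR N.

Lemma fA_bound A a y : 0 < a -> Rabs (fA A a y) <= 1 + a.
Proof. intros. unfold fA. pose proof (indb_bound (A y)). apply Rabs_le. lra. Qed.

Lemma aa_bound A a Y N i : 0 < a -> (0 < N)%nat -> Rabs (aa A a Y N i) <= 1 + a.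
Proof.
  intros Ha HN. unfold aa. assert (0 < INR N) by (apply lt_0_INR; lia).
  unfold Rdiv. rewrite Rabs_mult, Rabs_inv, (Rabs_pos_eq (INR N)) by lra.
  apply Rmult_le_reg_r with (INR N); auto. rewrite Rmult_assoc, Rinv_l by lra.
  rewrite Rmult_1_r, Rmult_comm. apply sum1_bound. intros x _.
  rewrite Rabs_mult. pose proof (fA_bound A a (x+i) Ha). pose proof (indb_bound (Y x)).
  rewrite Rabs_pos_eq by lra. assert (0 <= Rabs (fA A a (x + i))) by apply Rabs_pos. nra.
Qed.

Lemma L_sq A a Y N n : (0 < N)%nat ->
  sum1 (fun i => aa A a Y N i ^ 2) n = sum1 (fun x => indb (Y x) * hh A a Y N n x) N / INR N.
Proof.
  intros HN. assert (0 < INR N) by (apply lt_0_INR; lia).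
  rewrite (sum1_ext _ (fun i => / INR N * sum1 (fun x => aa A a Y N i * (indb (Y x) * fA A a (x + i)%nat)) N)).
  2:{ intros i _. rewrite sum1_scal. unfold aa. unfold Rdiv. ring. }
  rewrite sum1_scal, sum1_swap. unfold Rdiv. rewrite Rmult_comm. f_equal.
  apply sum1_ext. intros x _. unfold hh. rewrite <- sum1_scal. apply sum1_ext. intros; ring.
Qed.

Lemma L_h A a Y N n : (0 < N)%nat ->
  sum1 (fun x => hh A a Y N n x ^ 2) N / INR N =
  sum1 (fun i => sum1 (fun j => aa A a Y N i * aa A a Y N j * GG A a N i j) n) n.
Proof.
  intros HN. assert (0 < INR N) by (apply lt_0_INR; lia).
  rewrite (sum1_ext (fun x => hh A a Y N n x ^ 2)
     (fun x => sum1 (fun i => sum1 (fun j => (aa A a Y N i * fA A a (x + i)%nat) * (aa A a Y N j * fA A a (x + j)%nat)) n) n)).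
  2:{ intros x _. unfold hh. rewrite <- sum1_prod. ring. }
  rewrite sum1_swap.
  unfold Rdiv. rewrite Rmult_comm, <- sum1_scal. apply sum1_ext. intros i _.
  rewrite sum1_swap, <- sum1_scal. apply sum1_ext. intros j _.
  rewrite (sum1_ext _ (fun x => (aa A a Y N i * aa A a Y N j) * (fA A a (x + i)%nat * fA A a (x + j)%nat)))
    by (intros; ring).
  rewrite sum1_scal. unfold GG, Rdiv. ring.
Qed.

Lemma KL_alg A a Y N n : 0 < a -> (0 < N)%nat ->
  (sum1 (fun i => aa A a Y N i ^ 2) n) ^ 2 <=
  (1 + a) ^ 2 * sum1 (fun i => sum1 (fun j => Rabs (GG A a N i j)) n) n.
Proof.
  intros Ha HN. assert (0 < INR N) by (apply lt_0_INR; lia).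
  set (h := hh A a Y N n).
  assert (H1 : 0 <= sum1 (fun i => aa A a Y N i ^ 2) n) by (apply sum1_nonneg; intros; apply pow2_ge_0).
  assert (H2 : sum1 (fun i => aa A a Y N i ^ 2) n <= sum1 (fun x => Rabs (h x)) N / INR N).
  { rewrite L_sq by auto. unfold Rdiv. apply Rmult_le_compat_r; [left; apply Rinv_0_lt_compat; auto|].
    apply sum1_le. intros x _. pose proof (indb_bound (Y x)).
    unfold h. destruct (Rle_dec 0 (hh A a Y N n x)).
    - rewrite Rabs_pos_eq by auto. nra.
    - rewrite Rabs_left by lra. nra. }
  assert (H3 : (sum1 (fun x => Rabs (h x)) N / INR N) ^ 2 <= sum1 (fun x => h x ^ 2) N / INR N).
  { pose proof (sum1_CS (fun x => Rabs (h x)) N).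
    rewrite (sum1_ext (fun x => Rabs (h x) ^ 2) (fun x => h x ^ 2)) in H0 by (intros; rewrite <- Rsqr_pow2, <- Rsqr_abs, Rsqr_pow2; reflexivity).
    unfold Rdiv. rewrite Rpow_mult_distr.
    apply Rmult_le_reg_r with (INR N ^ 2); [apply pow_lt; auto|].
    replace ((sum1 (fun x => Rabs (h x)) N) ^ 2 * (/ INR N) ^ 2 * INR N ^ 2) with ((sum1 (fun x => Rabs (h x)) N) ^ 2)
      by (field; lra).
    replace (sum1 (fun x => h x ^ 2) N * / INR N * INR N ^ 2) with (INR N * sum1 (fun x => h x ^ 2) N)
      by (field; lra). auto. }
  unfold h in H3. rewrite L_h in H3 by auto.
  assert (H4 : sum1 (fun i => sum1 (fun j => aa A a Y N i * aa A a Y N j * GG A a N i j) n) n <=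
     (1 + a) ^ 2 * sum1 (fun i => sum1 (fun j => Rabs (GG A a N i j)) n) n).
  { rewrite <- sum1_scal. apply sum1_le. intros i _. rewrite <- sum1_scal. apply sum1_le. intros j _.
    eapply Rle_trans; [apply Rle_abs|]. rewrite !Rabs_mult.
    pose proof (aa_bound A a Y N i Ha HN). pose proof (aa_bound A a Y N j Ha HN).
    pose proof (Rabs_pos (aa A a Y N i)). pose proof (Rabs_pos (aa A a Y N j)). pose proof (Rabs_pos (GG A a N i j)).
    assert (Rabs (aa A a Y N i) * Rabs (aa A a Y N j) <= (1 + a) ^ 2) by nra. nra. }
  assert (HH: (sum1 (fun i => aa A a Y N i ^ 2) n) ^ 2 <= (sum1 (fun x => Rabs (h x)) N / INR N) ^ 2).
  { apply pow_incr; auto. }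
  fold h in H3. lra.
Qed.

Definition GG0 A a N d : R := sum1 (fun x => fA A a x * fA A a (x + d)%nat) N / INR N.

Lemma GG_sym A a N i j : GG A a N i j = GG A a N j i.
Proof. unfold GG. f_equal. apply sum1_ext. intros; ring. Qed.

Lemma div_bound S N B : (0 < N)%nat -> Rabs S <= INR N * B -> Rabs (S / INR N) <= B.
Proof.
  intros HN H. assert (0 < INR N) by (apply lt_0_INR; lia).
  unfold Rdiv. rewrite Rabs_mult, Rabs_inv, (Rabs_pos_eq (INR N)) by lra.
  apply Rmult_le_reg_r with (INR N); auto. rewrite Rmult_assoc, Rinv_l by lra. lra.
Qed.

Lemma fA2_bound A a y z : 0 < a -> Rabs (fA A a y * fA A a z) <= (1 + a) ^ 2.
Proof.
  intros Ha. rewrite Rabs_mult. pose proof (fA_bound A a y Ha). pose proof (fA_bound A a z Ha).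
  pose proof (Rabs_pos (fA A a y)). pose proof (Rabs_pos (fA A a z)). nra.
Qed.

Lemma GG_diag A a N i : 0 < a -> (0 < N)%nat -> Rabs (GG A a N i i) <= (1 + a) ^ 2.
Proof.
  intros Ha HN. unfold GG. apply div_bound; auto. apply sum1_bound. intros; apply fA2_bound; auto.
Qed.

Lemma GG_shift A a N i j : 0 < a -> (0 < N)%nat -> (i <= j)%nat ->
  Rabs (GG A a N i j - GG0 A a N (j - i)) <= 2 * INR i * (1 + a) ^ 2 / INR N.
Proof.
  intros Ha HN Hij. unfold GG, GG0. unfold Rdiv at 1 2. rewrite <- Rmult_minus_distr_r.
  replace (2 * INR i * (1 + a) ^ 2 / INR N) with ((2 * INR i * (1 + a) ^ 2) / INR N) by reflexivity.
  apply div_bound; auto.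
  replace (INR N * (2 * INR i * (1 + a) ^ 2 / INR N)) with (2 * INR i * (1 + a) ^ 2)
    by (field; apply not_0_INR; lia).
  rewrite (sum1_ext _ (fun x => (fun y => fA A a y * fA A a (y + (j - i))%nat) (x + i)%nat)).
  2:{ intros x _. simpl. f_equal. f_equal. lia. }
  apply (sum1_shift (fun y => fA A a y * fA A a (y + (j - i))%nat)). intros; apply fA2_bound; auto.
Qed.

Lemma shiftA A N d : Rabs (sum1 (fun x => indb (A (x + d)%nat)) N - INR (count A N)) <= 2 * INR d.
Proof.
  rewrite count_sum. replace (2 * INR d) with (2 * INR d * 1) by ring.
  apply (sum1_shift (fun y => indb (A y))). intros y. pose proof (indb_bound (A y)). apply Rabs_le; lra.
Qed.

Lemma GG0_expand A a N d : (0 < N)%nat ->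
  GG0 A a N d = INR (count (shift_inter A d) N) / INR N - a * (INR (count A N) / INR N)
     - a * (sum1 (fun x => indb (A (x + d)%nat)) N / INR N) + a ^ 2.
Proof.
  intros HN. assert (0 < INR N) by (apply lt_0_INR; lia).
  unfold GG0. rewrite !count_sum.
  rewrite (sum1_ext _ (fun x => indb (shift_inter A d x) - a * indb (A x) - a * indb (A (x + d)%nat) + a ^ 2)).
  2:{ intros x _. unfold fA, shift_inter. unfold indb. destruct (A x), (A (x + d)%nat); simpl; ring. }
  rewrite sum1_plus, !sum1_minus, !sum1_scal, sum1_const. field. lra.
Qed.

Lemma GG_approx A a N n i j (cd eta : R) : 0 < a -> (0 < N)%nat -> 0 < eta ->
  (1 <= i)%nat -> (i < j)%nat -> (j <= n)%nat -> INR n <= eta * INR N ->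
  Rabs (INR (count (shift_inter A (j - i)) N) / INR N - cd) < eta ->
  Rabs (INR (count A N) / INR N - a) < eta ->
  Rabs (GG A a N i j) <= Rabs (cd - a ^ 2) + (2 * (1 + a) ^ 2 + 1 + 4 * a) * eta.
Proof.
  intros Ha HN He Hi Hij Hj Hn Hc HA. assert (0 < INR N) by (apply lt_0_INR; lia).
  pose proof (GG_shift A a N i j Ha HN ltac:(lia)) as H1.
  rewrite (GG0_expand A a N (j - i) HN) in H1.
  pose proof (shiftA A N (j - i)) as H2.
  assert (INR i <= INR n) by (apply le_INR; lia).
  assert (INR (j - i) <= INR n) by (apply le_INR; lia).
  assert (HiN : 2 * INR i * (1 + a) ^ 2 / INR N <= 2 * (1 + a) ^ 2 * eta).
  { apply Rmult_le_reg_r with (INR N); auto. unfold Rdiv. rewrite Rmult_assoc, Rinv_l by lra.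
    assert (0 <= (1 + a) ^ 2) by apply pow2_ge_0. nra. }
  set (s := sum1 (fun x => indb (A (x + (j - i))%nat)) N) in *.
  set (cA := INR (count A N)) in *.
  assert (Hs : Rabs (s / INR N - cA / INR N) <= 2 * eta).
  { unfold Rdiv. rewrite <- Rmult_minus_distr_r. fold ((s - cA) / INR N). apply div_bound; auto.
    eapply Rle_trans; [apply H2|]. nra. }
  apply Rabs_le_between in H1. apply Rabs_le_between in Hs.
  apply Rabs_lt_between' in Hc. apply Rabs_lt_between' in HA.
  set (g := GG A a N i j) in *.
  set (x1 := INR (count (shift_inter A (j - i)) N) / INR N) in *.
  set (x2 := cA / INR N) in *. set (x3 := s / INR N) in *.
  assert (Hx : Rabs (g - (cd - a ^ 2)) <= (2 * (1 + a) ^ 2 + 1 + 4 * a) * eta).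
  { apply Rabs_le.
    assert (E : g - (cd - a ^ 2) = (g - (x1 - a * x2 - a * x3 + a ^ 2)) + (x1 - cd) - a * (x2 - a) - a * (x3 - x2) - a * (x2 - a)) by ring.
    rewrite E. split; nra. }
  eapply Rle_trans; [|apply Rplus_le_compat_l; exact Hx].
  replace g with ((cd - a ^ 2) + (g - (cd - a ^ 2))) at 1 by ring. apply Rabs_triang.
Qed.

Lemma KL_U (U : (nat -> Prop) -> Prop) (hU : nonprincipal_ultrafilter U) (A : nat -> bool) (a : R)
  (Nk : nat -> nat) (c : nat -> R) :
  0 < a -> hyper_infinite U Nk -> loeb_measure_is U Nk A a ->
  (forall i : nat, (1 <= i)%nat -> loeb_measure_is U Nk (shift_inter A i) (c i)) ->
  Un_cv (fun n => / INR n * sum1 (fun i => Rabs (c i - a ^ 2)) n) 0 ->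
  forall Q, 0 < Q -> exists n0, forall n, (n0 <= n)%nat ->
    U (fun k => forall Y, sum1 (fun i => aa A a Y (Nk k) i ^ 2) n <= Q * INR n).
Proof.
  intros Ha HNk HA Hc Hcv Q HQ.
  set (M := 1 + a). set (K := 2 * M ^ 2 + 1 + 4 * a).
  assert (HM : 0 < M) by (unfold M; lra).
  assert (HK : 0 < K) by (unfold K; nra).
  set (eta := Q ^ 2 / (6 * M ^ 2 * K)).
  assert (Heta : 0 < eta) by (unfold eta; apply Rdiv_lt_0_compat; [nra| apply Rmult_lt_0_compat; nra]).
  set (E := fun n => sum1 (fun i => Rabs (c i - a ^ 2)) n).
  destruct (Hcv (Q ^ 2 / (6 * M ^ 2))) as [N1 HN1].
  { apply Rdiv_lt_0_compat; nra. }
  destruct (INR_unbounded (3 * M ^ 4 / Q ^ 2)) as [N2 HN2].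
  exists (S (max N1 N2)). intros n Hn.
  assert (Hn0 : 0 < INR n) by (apply lt_0_INR; lia).
  assert (HEn : E n <= INR n * (Q ^ 2 / (6 * M ^ 2))).
  { specialize (HN1 n ltac:(lia)). unfold R_dist in HN1. rewrite Rminus_0_r in HN1.
    apply Rabs_lt_between' in HN1. fold (E n) in HN1.
    apply Rmult_le_reg_l with (/ INR n); [apply Rinv_0_lt_compat; auto|].
    rewrite <- Rmult_assoc, Rinv_l by lra. lra. }
  assert (HMn : M ^ 4 <= INR n * (Q ^ 2 / 3)).
  { assert (INR N2 <= INR n) by (apply le_INR; lia).
    assert (3 * M ^ 4 / Q ^ 2 < INR n) by lra.
    apply Rmult_lt_compat_r with (r := Q ^ 2 / 3) in H0; [|nra].
    replace (3 * M ^ 4 / Q ^ 2 * (Q ^ 2 / 3)) with (M ^ 4) in H0 by (field; lra). lra. }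
  destruct (INR_unbounded (INR n / eta)) as [m Hm].
  assert (U1 : U (fun k => forall d, (1 <= d <= n)%nat ->
      Rabs (INR (count (shift_inter A d) (Nk k)) / INR (Nk k) - c d) < eta)).
  { apply U_fin; auto. intros d Hd. apply (Hc d ltac:(lia)). lra. }
  pose proof (U_and U hU _ _ U1 (HA eta ltac:(lra))) as U2.
  pose proof (U_and U hU _ _ U2 (HNk m)) as U3.
  pose proof (U_and U hU _ _ U3 (HNk 0%nat)) as U4.
  eapply U_mono; [auto|exact U4|]. simpl.
  intros k [[[H1 H2] H3] H4] Y.
  set (N := Nk k) in *.
  assert (HNR : 0 < INR N) by (apply lt_0_INR; lia).
  assert (HnN : INR n <= eta * INR N).
  { assert (INR m < INR N) by (apply lt_INR; lia).
    apply Rmult_lt_compat_r with (r := eta) in Hm; auto.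
    replace (INR n / eta * eta) with (INR n) in Hm by (field; lra). nra. }
  pose proof (KL_alg A a Y N n Ha H4) as Halg.
  assert (HT := Tbound (GG A a N) (fun d => Rabs (c d - a ^ 2)) n (M ^ 2) (K * eta)
    (fun d => Rabs_pos _) ltac:(nra) ltac:(nra) (GG_sym A a N) (fun i => GG_diag A a N i Ha H4)).
  specialize (HT ltac:(intros i j Hi Hij Hj; apply GG_approx with n; auto; [apply H1; lia])).
  specialize (HT n (le_n n)). fold (E n) in HT. fold M in Halg.
  set (S0 := sum1 (fun i => aa A a Y N i ^ 2) n) in *.
  assert (HS0 : 0 <= S0) by (apply sum1_nonneg; intros; apply pow2_ge_0).
  assert (Hbig : S0 ^ 2 <= (Q * INR n) ^ 2).
  { eapply Rle_trans; [exact Halg|].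
    assert (0 <= E n) by (apply sum1_nonneg; intros; apply Rabs_pos).
    apply Rle_trans with (M ^ 2 * (INR n * (M ^ 2 + 2 * E n + 2 * INR n * (K * eta)))).
    { apply Rmult_le_compat_l; [nra|exact HT]. }
    assert (HE2 : M ^ 2 * (2 * E n) <= INR n * (Q ^ 2 / 3)).
    { replace (INR n * (Q ^ 2 / 3)) with (2 * M ^ 2 * (INR n * (Q ^ 2 / (6 * M ^ 2)))) by (field; nra).
      nra. }
    replace (M ^ 2 * (INR n * (M ^ 2 + 2 * E n + 2 * INR n * (K * eta))))
      with (INR n * (M ^ 4 + M ^ 2 * (2 * E n) + INR n * (M ^ 2 * (2 * (K * eta))))) by ring.
    assert (Hq : M ^ 2 * (2 * (K * eta)) = Q ^ 2 / 3) by (unfold eta; field; nra).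
    rewrite Hq. nra. }
  assert (0 <= Q * INR n) by nra.
  destruct (Rle_dec S0 (Q * INR n)) as [|Hc']; auto. apply Rnot_le_lt in Hc'. exfalso.
  assert ((Q * INR n) * (Q * INR n) < S0 * S0) by (apply Rmult_le_0_lt_compat; lra).
  simpl in Hbig. lra.
Qed.

Definition Pos (U : (nat -> Prop) -> Prop) (Nk : nat -> nat) (Y : nat -> bool) : Prop :=
  exists delta, delta > 0 /\ U (fun k => INR (count Y (Nk k)) / INR (Nk k) > delta).

Lemma count_le X n : (count X n <= n)%nat.
Proof. induction n; simpl; [lia|]. destruct (X (S n)); lia. Qed.

Lemma ind_count X m n :
  INR (count X n) - INR m <= sum1 (fun i => indb (andb (Nat.ltb m i) (X i))) n.
Proof.
  induction n.
  - simpl. pose proof (pos_INR m). lra.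
  - rewrite sum1_succ. simpl count. rewrite plus_INR.
    destruct (Nat.ltb m (S n)) eqn:E.
    + simpl andb. unfold indb at 2. destruct (X (S n)); simpl; lra.
    + apply Nat.ltb_ge in E.
      pose proof (count_le X n). apply le_INR in H. apply le_INR in E. rewrite S_INR in E.
      assert (0 <= sum1 (fun i => indb (andb (Nat.ltb m i) (X i))) n) by
        (apply sum1_nonneg; intros; apply indb_bound).
      assert (0 <= indb (andb (Nat.ltb m (S n)) (X (S n)))) by apply indb_bound.
      destruct (X (S n)); simpl; lra.
Qed.

Lemma aa_eq A a Y N i : (0 < N)%nat ->
  aa A a Y N i = INR (count (fun x => andb (Y x) (A (x + i)%nat)) N) / INR N - a * (INR (count Y N) / INR N).
Proof.
  intros HN. assert (0 < INR N) by (apply lt_0_INR; lia).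
  unfold aa. rewrite !count_sum.
  rewrite (sum1_ext _ (fun x => indb (andb (Y x) (A (x + i)%nat)) - a * indb (Y x))).
  2:{ intros. unfold fA, indb. destruct (Y x), (A (x + i)%nat); simpl; ring. }
  rewrite sum1_minus, sum1_scal. field. lra.
Qed.

Lemma SL (U : (nat -> Prop) -> Prop) (hU : nonprincipal_ultrafilter U) (A : nat -> bool) (a : R)
  (Nk : nat -> nat) (c : nat -> R) :
  0 < a -> hyper_infinite U Nk -> loeb_measure_is U Nk A a ->
  (forall i : nat, (1 <= i)%nat -> loeb_measure_is U Nk (shift_inter A i) (c i)) ->
  Un_cv (fun n => / INR n * sum1 (fun i => Rabs (c i - a ^ 2)) n) 0 ->
  forall X Y m, Pos U Nk X -> Pos U Nk Y ->
  exists i, (m < i)%nat /\ X i = true /\ Pos U Nk (fun x => andb (Y x) (A (x + i)%nat)).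
Proof.
  intros Ha HNk HA Hc Hcv X Y m [dX [HdX UX]] [dY [HdY UY]].
  set (th := a * dY / 2).
  assert (Hth : 0 < th) by (unfold th; nra).
  set (Q := th ^ 2 * dX / 4).
  assert (HQ : 0 < Q) by (unfold Q; apply Rdiv_lt_0_compat; [apply Rmult_lt_0_compat; [apply pow_lt|]|]; lra).
  destruct (KL_U U hU A a Nk c Ha HNk HA Hc Hcv Q HQ) as [n0 Hn0].
  destruct (INR_unbounded (2 * INR m / dX)) as [m2 Hm2].
  destruct (U_ne U hU _ (U_and U hU _ _ UX (U_and U hU _ _ (HNk n0) (U_and U hU _ _ (HNk m2) (HNk 0%nat)))))
    as [k0 [HX0 [Hk1 [Hk2 Hk3]]]].
  set (n := Nk k0) in *.
  assert (HnR : 0 < INR n) by (apply lt_0_INR; lia).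
  destruct (classic (exists i, (m < i <= n)%nat /\ X i = true /\
      U (fun k => aa A a Y (Nk k) i ^ 2 < th ^ 2))) as [[i [Hi [HXi Ug]]]|Hno].
  - exists i. split; [lia|]. split; auto.
    exists (a * dY / 2). split; [nra|].
    eapply U_mono; [auto| apply (U_and U hU _ _ Ug (U_and U hU _ _ UY (HNk 0%nat)))|].
    intros k [H1 [H2 H3]]. simpl in *.
    rewrite aa_eq in H1 by auto.
    set (z := INR (count (fun x => andb (Y x) (A (x + i)%nat)) (Nk k)) / INR (Nk k)) in *.
    set (w := INR (count Y (Nk k)) / INR (Nk k)) in *.
    assert (- th < z - a * w) by nra. unfold th in *. nra.
  - exfalso.
    assert (Ubad : U (fun k => forall i, (1 <= i <= n)%nat ->
        andb (Nat.ltb m i) (X i) = true -> th ^ 2 <= aa A a Y (Nk k) i ^ 2)).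
    { apply U_fin; auto. intros i Hi.
      destruct (andb (Nat.ltb m i) (X i)) eqn:E.
      - apply Bool.andb_true_iff in E. destruct E as [E1 E2]. apply Nat.ltb_lt in E1.
        pose proof hU as HU3. destruct HU3 as [_ [_ [H3 _]]].
        destruct (H3 (fun k => aa A a Y (Nk k) i ^ 2 < th ^ 2)) as [G|G].
        + exfalso. apply Hno. exists i. split; [lia|]. auto.
        + eapply U_mono; [auto|exact G|]. intros k Hk _. lra.
      - apply U_true; auto. intros k Hk; discriminate. }
    destruct (U_ne U hU _ (U_and U hU _ _ Ubad (Hn0 n ltac:(lia)))) as [k [Hb Hs]].
    specialize (Hs Y).
    assert (H1 : th ^ 2 * sum1 (fun i => indb (andb (Nat.ltb m i) (X i))) n
                 <= sum1 (fun i => aa A a Y (Nk k) i ^ 2) n).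
    { rewrite <- sum1_scal. apply sum1_le. intros i Hi.
      destruct (andb (Nat.ltb m i) (X i)) eqn:E; unfold indb.
      - rewrite Rmult_1_r. apply Hb; auto.
      - rewrite Rmult_0_r. apply pow2_ge_0. }
    pose proof (ind_count X m n) as H2.
    assert (H3 : INR m < dX * INR n / 2).
    { assert (INR m2 < INR n) by (apply lt_INR; lia).
      assert (2 * INR m / dX < INR n) by lra.
      apply Rmult_lt_compat_r with (r := dX / 2) in H0; [|lra].
      replace (2 * INR m / dX * (dX / 2)) with (INR m) in H0 by (field; lra). lra. }
    assert (H4 : dX * INR n < INR (count X n)).
    { unfold n in *. apply Rmult_lt_reg_r with (/ INR (Nk k0)); [apply Rinv_0_lt_compat; auto|].
      rewrite Rmult_assoc, Rinv_r by lra. rewrite Rmult_1_r. exact HX0. }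
    assert (H5 : dX * INR n / 2 < sum1 (fun i => indb (andb (Nat.ltb m i) (X i))) n) by lra.
    assert (th ^ 2 * (dX * INR n / 2) < th ^ 2 * sum1 (fun i => indb (andb (Nat.ltb m i) (X i))) n)
      by (apply Rmult_lt_compat_l; nra).
    assert (0 < th ^ 2 * dX * INR n) by (apply Rmult_lt_0_compat; [apply Rmult_lt_0_compat; [apply pow_lt|]|]; lra).
    unfold Q in Hs. lra.
Qed.

Definition St (U : (nat -> Prop) -> Prop) (Nk : nat -> nat) :=
  {st : (nat -> bool) * (nat -> bool) | Pos U Nk (fst st) /\ Pos U Nk (snd st)}.

Lemma step_ex (U : (nat -> Prop) -> Prop) (hU : nonprincipal_ultrafilter U) (A : nat -> bool) (a : R)
  (Nk : nat -> nat) (c : nat -> R) :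
  0 < a -> hyper_infinite U Nk -> loeb_measure_is U Nk A a ->
  (forall i : nat, (1 <= i)%nat -> loeb_measure_is U Nk (shift_inter A i) (c i)) ->
  Un_cv (fun n => / INR n * sum1 (fun i => Rabs (c i - a ^ 2)) n) 0 ->
  forall n (p : St U Nk), exists q : nat * nat * St U Nk,
    let '(cc, b, p') := q in
    (n < cc)%nat /\ fst (proj1_sig p) cc = true /\ (n < b)%nat /\ snd (proj1_sig p) b = true /\
    A (b + cc)%nat = true /\
    proj1_sig p' = ((fun x => andb (fst (proj1_sig p) x) (A (x + b)%nat)),
                    (fun x => andb (snd (proj1_sig p) x) (A (x + cc)%nat))).
Proof.
  intros Ha HNk HA Hc Hcv n [[S T] [HS HT]]. simpl.
  destruct (SL U hU A a Nk c Ha HNk HA Hc Hcv S T n HS HT) as [cc [Hcc [HScc HT']]].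
  destruct (SL U hU A a Nk c Ha HNk HA Hc Hcv _ S n HT' HS) as [b [Hb [HTb HS']]].
  apply Bool.andb_true_iff in HTb. destruct HTb as [HTb HAb].
  exists (cc, b, exist _ ((fun x => andb (S x) (A (x + b)%nat)), (fun x => andb (T x) (A (x + cc)%nat)))
     (conj HS' HT')).
  simpl. repeat split; auto.
Qed.

Lemma build (T : Type) (R : nat -> T -> nat * nat * T -> Prop) (p0 : T) :
  (forall n p, exists q, R n p q) ->
  exists (st : nat -> T) (cs bs : nat -> nat), st 0%nat = p0 /\ forall n, R n (st n) (cs n, bs n, st (S n)).
Proof.
  intros H.
  set (f := fun n p => proj1_sig (constructive_indefinite_description _ (H n p))).
  assert (Hf : forall n p, R n p (f n p)) by (intros; unfold f; apply proj2_sig).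
  set (st := fix st (n : nat) : T := match n with 0%nat => p0 | S m => snd (f m (st m)) end).
  exists st, (fun n => fst (fst (f n (st n)))), (fun n => snd (fst (f n (st n)))).
  split; [reflexivity|]. intros n.
  specialize (Hf n (st n)). simpl.
  destruct (f n (st n)) as [[x y] z]. simpl. exact Hf.
Qed.

Lemma count_true N : count (fun _ => true) N = N.
Proof. induction N; simpl; lia. Qed.

Lemma Pos_true U (hU : nonprincipal_ultrafilter U) Nk : hyper_infinite U Nk -> Pos U Nk (fun _ => true).
Proof.
  intros HNk. exists (1/2). split; [lra|].
  eapply U_mono; [auto|apply (HNk 0%nat)|]. intros k Hk. cbv beta in Hk.
  rewrite count_true. assert (0 < INR (Nk k)) by (apply lt_0_INR; lia).
  replace (INR (Nk k) / INR (Nk k)) with 1 by (field; lra). lra.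
Qed.

Theorem theorem5p5 (U : (nat -> Prop) -> Prop) (A : nat -> bool)
  (hU : nonprincipal_ultrafilter U) (hA : pseudorandom U A) :
  exists B C : nat -> bool,
    subset_posnat B /\ subset_posnat C /\
    infinite_set B /\ infinite_set C /\
    (forall b c : nat, B b = true -> C c = true -> A (b + c)%nat = true).
Proof.
  destruct hA as [a [Ha [_ [Nk [HNk [HA [c [Hc Hcv]]]]]]]].
  pose proof (step_ex U hU A a Nk c Ha HNk HA Hc Hcv) as Hstep.
  set (p0 := exist (fun st : (nat -> bool) * (nat -> bool) => Pos U Nk (fst st) /\ Pos U Nk (snd st))
                   ((fun _ => true), (fun _ => true)) (conj (Pos_true U hU Nk HNk) (Pos_true U hU Nk HNk))).
  destruct (build (St U Nk) _ p0 Hstep) as [st [cs [bs [_ Hsp]]]].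
  set (Sn := fun n => fst (proj1_sig (st n))).
  set (Tn := fun n => snd (proj1_sig (st n))).
  assert (HS : forall m x, Sn m x = true -> forall l, (l < m)%nat -> A (x + bs l)%nat = true).
  { induction m; intros x Hx l Hl; [lia|].
    destruct (Hsp m) as [_ [_ [_ [_ [_ E]]]]].
    unfold Sn in Hx. rewrite E in Hx. simpl in Hx. apply Bool.andb_true_iff in Hx.
    destruct Hx as [Hx1 Hx2]. destruct (Nat.eq_dec l m) as [->|]; auto.
    apply IHm; auto; lia. }
  assert (HT : forall m x, Tn m x = true -> forall l, (l < m)%nat -> A (x + cs l)%nat = true).
  { induction m; intros x Hx l Hl; [lia|].
    destruct (Hsp m) as [_ [_ [_ [_ [_ E]]]]].
    unfold Tn in Hx. rewrite E in Hx. simpl in Hx. apply Bool.andb_true_iff in Hx.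
    destruct Hx as [Hx1 Hx2]. destruct (Nat.eq_dec l m) as [->|]; auto.
    apply IHm; auto; lia. }
  set (B := fun x => if excluded_middle_informative (exists n, bs n = x) then true else false).
  set (C := fun x => if excluded_middle_informative (exists n, cs n = x) then true else false).
  exists B, C.
  assert (HB : forall x, B x = true -> exists n, bs n = x).
  { intros x. unfold B. destruct (excluded_middle_informative _); auto; discriminate. }
  assert (HC : forall x, C x = true -> exists n, cs n = x).
  { intros x. unfold C. destruct (excluded_middle_informative _); auto; discriminate. }
  repeat split.
  - intros x Hx. destruct (HB x Hx) as [n <-]. destruct (Hsp n) as [_ [_ [H _]]]. lia.
  - intros x Hx. destruct (HC x Hx) as [n <-]. destruct (Hsp n) as [H _]. lia.
  - intros m. exists (bs m). destruct (Hsp m) as [_ [_ [H _]]]. split; [lia|].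
    unfold B. destruct (excluded_middle_informative _) as [|N]; auto. exfalso; apply N; eauto.
  - intros m. exists (cs m). destruct (Hsp m) as [H _]. split; [lia|].
    unfold C. destruct (excluded_middle_informative _) as [|N]; auto. exfalso; apply N; eauto.
  - intros x y Hx Hy. destruct (HB x Hx) as [i <-]. destruct (HC y Hy) as [j <-].
    destruct (Hsp i) as [_ [_ [_ [Hbi [Hii _]]]]].
    destruct (Hsp j) as [_ [Hcj _]].
    destruct (lt_eq_lt_dec j i) as [[Hji| ->]|Hij]; auto.
    + apply (HT i); auto.
    + rewrite Nat.add_comm. apply (HS j); auto.
Qed.
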